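(* Let $\mathcal{X}=\{\boldsymbol{x}_1,\dots,\boldsymbol{x}_N\}\subseteq\mathbb{R}^D$, $N\ge2$, with $\|\boldsymbol{x}_j\|_2=1$ for all $j$, and let $\lambda\in(1,\infty)$. Let $\mathcal{X}_0\subseteq\mathcal{X}$. If $\lambda<1/\max_{\boldsymbol{x}'\in\mathcal{X}}\max_{\boldsymbol{x}''\in\mathcal{X},\boldsymbol{x}''\neq\boldsymbol{x}'}|\langle\boldsymbol{x}',\boldsymbol{x}''\rangle|$, then $f_\lambda(\boldsymbol{x}_j,\mathcal{X}_0)=\lambda/2$ for all $\boldsymbol{x}_j\in\mathcal{X}\setminus\mathcal{X}_0$.
   Context: For $\mathcal{X}_0\subseteq\mathcal{X}$ nonempty and $\boldsymbol{x}_j\in\mathcal{X}$, define $f_\lambda(\boldsymbol{x}_j,\mathcal{X}_0):=\min_{\boldsymbol{c}\in\mathbb{R}^N}\|\boldsymbol{c}\|_1+\frac{\lambda}{2}\|\boldsymbol{x}_j-\sum_{i:\boldsymbol{x}_i\in\mathcal{X}_0}c_i\boldsymbol{x}_i\|_2^2$, and by convention $f_\lambda(\boldsymbol{x}_j,\emptyset):=\lambda/2$. If the maximum inner product is $0$, the bound is read as $+\infty$. *)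

(* Defs.v *)
From HB Require Import structures.
From mathcomp Require Import all_boot all_order all_algebra.
From mathcomp Require Import classical_sets reals.
Set Implicit Arguments.
Unset Strict Implicit.
Unset Printing Implicit Defensive.
Import Order.TTheory GRing.Theory Num.Theory.
Local Open Scope ring_scope.
Local Open Scope classical_set_scope.

Definition inner (R : realType) (D : nat) (u v : 'rV[R]_D) : R :=
  \sum_(d < D) u 0 d * v 0 d.

Definition sqnorm (R : realType) (D : nat) (u : 'rV[R]_D) : R := inner u u.

Definition l1norm (R : realType) (N : nat) (c : 'rV[R]_N) : R :=
  \sum_(i < N) `|c 0 i|.

Definition objective (R : realType) (D N : nat) (lambda : R)
    (x : 'I_N -> 'rV[R]_D) (X0 : {set 'I_N}) (j : 'I_N) (c : 'rV[R]_N) : R :=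
  l1norm c + lambda / 2 * sqnorm (x j - \sum_(i in X0) c 0 i *: x i).

(* f_lambda(x_j, X0) = min over c in R^N of the objective (as an infimum).
   For X0 empty the formula gives lambda/2, which matches the paper's convention. *)
Definition f_lambda (R : realType) (D N : nat) (lambda : R)
    (x : 'I_N -> 'rV[R]_D) (j : 'I_N) (X0 : {set 'I_N}) : R :=
  inf [set objective lambda x X0 j c | c in [set: 'rV[R]_N]].

Definition max_coherence (R : realType) (D N : nat) (x : 'I_N -> 'rV[R]_D) : R :=
  \big[Num.max/0]_(i < N) \big[Num.max/0]_(k < N | k != i) `|inner (x i) (x k)|.

(* Main.v *)
Require Import Defs.
From HB Require Import structures.
From mathcomp Require Import all_boot all_order all_algebra.
From mathcomp Require Import classical_sets reals.
From mathcomp Require Import ring lra.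
Import Order.TTheory GRing.Theory Num.Theory.
Local Open Scope ring_scope.

Lemma bigmax0_ge (R : realType) (I : eqType) (r : seq I) (P : pred I) (F : I -> R) i :
  i \in r -> P i -> F i <= \big[Num.max/0]_(k <- r | P k) F k.
Proof.
elim: r => [//|a r IH]; rewrite inE big_cons => /orP [/eqP <- Pi|ir Pi].
  by rewrite Pi le_max lexx.
case: ifP => _; last exact: IH.
by rewrite le_max (IH ir Pi) orbT.
Qed.

Lemma bigmax0_ge0 (R : realType) (I : Type) (r : seq I) (P : pred I) (F : I -> R) :
  0 <= \big[Num.max/0]_(k <- r | P k) F k.
Proof.
elim: r => [|a r IH]; first by rewrite big_nil.
by rewrite big_cons; case: ifP => _ //; rewrite le_max IH orbT.
Qed.

Lemma coh_le (R : realType) (D N : nat) (x : 'I_N -> 'rV[R]_D) i k :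
  k != i -> `|inner (x i) (x k)| <= max_coherence x.
Proof.
move=> ki; rewrite /max_coherence.
apply: le_trans; last exact: (bigmax0_ge _ _ _ xpredT (fun i => \big[Num.max/0]_(k < N | k != i) `|inner (x i) (x k)|) i (mem_index_enum i) (erefl true)).
exact: (bigmax0_ge _ _ _ (fun k => k != i) (fun k => `|inner (x i) (x k)|) k (mem_index_enum k) ki).
Qed.

Lemma coh_ge0 (R : realType) (D N : nat) (x : 'I_N -> 'rV[R]_D) :
  0 <= max_coherence x.
Proof. exact: bigmax0_ge0. Qed.

Lemma obj_ge (R : realType) (D N : nat) (x : 'I_N -> 'rV[R]_D)
    (lambda : R) (X0 : {set 'I_N}) j c :
  sqnorm (x j) = 1 -> 0 < lambda -> lambda * max_coherence x <= 1 ->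
  j \notin X0 -> lambda / 2 <= objective lambda x X0 j c.
Proof.
move=> nj l0 lm jX.
set mu := max_coherence x.
set s := \sum_(i in X0) c 0 i *: x i.
have sE d : s 0 d = \sum_(i in X0) c 0 i * x i 0 d.
  by rewrite /s summxE; apply: eq_bigr => i _; rewrite mxE.
have decomp : sqnorm (x j - s) = sqnorm (x j) - 2 * inner (x j) s + sqnorm s.
  rewrite /sqnorm /inner big_distrr /= -sumrB -big_split /=.
  by apply: eq_bigr => d _; rewrite !mxE; ring.
have s0 : 0 <= sqnorm s by apply: sumr_ge0 => d _; by rewrite -expr2 sqr_ge0.
have inE : inner (x j) s = \sum_(i in X0) c 0 i * inner (x j) (x i).
  rewrite /inner; under eq_bigr => d _ do rewrite sE big_distrr.
  rewrite exchange_big /=; apply: eq_bigr => i _; rewrite big_distrr /=.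
  by apply: eq_bigr => d _; ring.
set L := l1norm c.
have L0 : 0 <= L by apply: sumr_ge0.
have bnd : inner (x j) s <= mu * L.
  rewrite inE /L /l1norm mulr_sumr.
  apply: (@le_trans _ _ (\sum_(i in X0) mu * `|c 0 i|)).
    apply: ler_sum => i iX.
    apply: le_trans; first exact: ler_norm. rewrite normrM mulrC.
    apply: ler_wpM2r => //; apply: coh_le.
    by apply/eqP => ij; move: iX; rewrite ij (negbTE jX).
  rewrite [X in _ <= X](bigID (fun i => i \in X0)) /= lerDl.
  by apply: sumr_ge0 => i _; apply: mulr_ge0 => //; exact: coh_ge0.
rewrite /objective -/s decomp nj -/L.
have : lambda * (mu * L) <= L.
  by rewrite mulrA -[X in _ <= X]mul1r ler_wpM2r.
have : lambda * inner (x j) s <= lambda * (mu * L) by rewrite ler_pM2l.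
move: s0 l0; nra.
Qed.

Theorem theorem3 (R : realType) (D N : nat) (x : 'I_N -> 'rV[R]_D)
    (lambda : R) (X0 : {set 'I_N}) :
  (2 <= N)%N ->
  injective x ->
  (forall j, sqnorm (x j) = 1) ->
  1 < lambda ->
  (max_coherence x = 0 \/ lambda < (max_coherence x)^-1) ->
  forall j : 'I_N, j \notin X0 -> f_lambda lambda x j X0 = lambda / 2.
Proof.
move=> _ _ nx l1 hm j jX.
have l0 : 0 < lambda by apply: lt_trans l1.
have lm : lambda * max_coherence x <= 1.
  case: hm => [->|h]; first by rewrite mulr0.
  have m0 := @coh_ge0 _ _ _ x.
  case: (eqVneq (max_coherence x) 0) => [->|mn]; first by rewrite mulr0.
  have mp : 0 < max_coherence x by rewrite lt0r mn.
  by rewrite -(ler_pdivlMr _ _ mp) div1r ltW.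
have lb : lbound [set objective lambda x X0 j c | c in [set: 'rV[R]_N]] (lambda / 2).
  by move=> _ [c _ <-]; exact: obj_ge.
have obj0 : objective lambda x X0 j 0 = lambda / 2.
  rewrite /objective /l1norm big1 ?add0r; last by move=> i _; rewrite mxE normr0.
  rewrite big1 ?subr0 ?nx ?mulr1 //.
  by move=> i _; rewrite mxE scale0r.
apply/eqP; rewrite eq_le; apply/andP; split.
  rewrite -obj0; apply: ge_inf; first by exists (lambda / 2).
  by exists 0.
by apply: lb_le_inf => //; exists (lambda / 2); exists 0.
Qed.
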